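(* Let $f(x)=f_{d|d-1}(x_d|x_{d-1})\cdots f_{2|1}(x_2|x_1)f_1(x_1)$ be the density of a discrete-time Markov process $X=(X_1,\dots,X_d)$, and for $i=2,\dots,d$ let $m_i$ be the rank of $(t,s)\mapsto f_{i|i-1}(t|s)$, $m=\max_i m_i$. For an integer $k\ge0$ with $2k+1\le d$, let $\alpha=\{1,3,\dots,2k+1\}$. Then $\mathrm{rank}_\alpha(f)\le m_2m_3\cdots m_{2k+2}\le m^{2k+1}$ if $2k+1<d$, and $\mathrm{rank}_\alpha(f)\le m_2m_3\cdots m_{2k+1}\le m^{2k}$ if $2k+1=d$. *)

(* Defs.v *)
From Stdlib Require Import Reals Arith Lia.
Open Scope R_scope.

Fixpoint rsum (n : nat) (F : nat -> R) : R :=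
  match n with O => 0 | S n' => rsum n' F + F n' end.

Fixpoint nprod (a n : nat) (g : nat -> nat) : nat :=
  match n with O => 1%nat | S n' => (g a * nprod (S a) n' g)%nat end.

Fixpoint nmax (a n : nat) (g : nat -> nat) : nat :=
  match n with O => 0%nat | S n' => Nat.max (g a) (nmax (S a) n' g) end.

(* Density of a Markov chain X_1..X_d (points x : nat -> S, coordinates 1..d):
   f(x) = f_{d|d-1}(x_d|x_{d-1}) ... f_{2|1}(x_2|x_1) f_1(x_1),
   where cond i t s = f_{i|i-1}(t|s). *)
Fixpoint markov_density {S : Type} (f1 : S -> R) (cond : nat -> S -> S -> R)
  (d : nat) (x : nat -> S) : R :=
  match d with
  | O => 1
  | S O => f1 (x 1%nat)
  | S ((S _) as d') => cond d (x d) (x d') * markov_density f1 cond d' x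
  end.

Definition rank2_le {S : Type} (g : S -> S -> R) (r : nat) : Prop :=
  exists (u v : nat -> S -> R),
    forall t s, g t s = rsum r (fun j => u j t * v j s).

Definition is_rank2 {S : Type} (g : S -> S -> R) (m : nat) : Prop :=
  rank2_le g m /\ forall r, rank2_le g r -> (m <= r)%nat.

Definition depends_only {S : Type} (P : nat -> Prop) (g : (nat -> S) -> R) : Prop :=
  forall x y : nat -> S, (forall i, P i -> x i = y i) -> g x = g y.

(* rank_alpha(f) <= r, for f a function of (x_1..x_d) and alpha a subset of {1..d}:
   f(x) = sum_{j<r} g_j(x_alpha) h_j(x_{alpha^c}) *)
Definition alpha_rank_le {S : Type} (d : nat) (alpha : nat -> Prop)
  (f : (nat -> S) -> R) (r : nat) : Prop :=
  exists (g h : nat -> (nat -> S) -> R),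
    (forall j, depends_only alpha (g j)) /\
    (forall j, depends_only (fun i => (1 <= i <= d)%nat /\ ~ alpha i) (h j)) /\
    (forall x, f x = rsum r (fun j => g j x * h j x)).

Definition odd_alpha (k : nat) (i : nat) : Prop :=
  (1 <= i <= 2 * k + 1)%nat /\ Nat.odd i = true.

(* Main.v *)
Require Import Defs.
From Stdlib Require Import Reals Arith Lia.
Open Scope R_scope.

Lemma rsum_ext n F G : (forall j, (j < n)%nat -> F j = G j) -> rsum n F = rsum n G.
Proof.
  induction n; intros H; simpl; auto.
  rewrite IHn by (intros; apply H; lia). rewrite H by lia. reflexivity.
Qed.

Lemma rsum_add a b F : rsum (a + b) F = rsum a F + rsum b (fun j => F (a + j)%nat).
Proof.
  induction b; simpl.
  - rewrite Nat.add_0_r; ring.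
  - rewrite Nat.add_succ_r; simpl; rewrite IHb; ring.
Qed.

Lemma rsum_mul_l c n F : c * rsum n F = rsum n (fun j => c * F j).
Proof. induction n; simpl; [ring|rewrite <- IHn; ring]. Qed.

Lemma rsum_prod r s a b : rsum r a * rsum s b =
  rsum (r * s) (fun j => a (j / s)%nat * b (j mod s)%nat).
Proof.
  induction r; simpl.
  - ring.
  - rewrite (Nat.add_comm s (r * s)), rsum_add, <- IHr.
    rewrite Rmult_plus_distr_r. f_equal.
    rewrite rsum_mul_l. apply rsum_ext. intros j Hj.
    replace ((r * s + j) / s)%nat with r.
    replace ((r * s + j) mod s)%nat with j. reflexivity.
    + apply (Nat.mod_unique _ _ r); lia.
    + apply (Nat.div_unique _ _ _ j); lia.
Qed.

Lemma alpha_ext {S : Type} d al (F G : (nat -> S) -> R) r :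
  (forall x, F x = G x) -> alpha_rank_le d al F r -> alpha_rank_le d al G r.
Proof.
  intros E [g [h [H1 [H2 H3]]]]. exists g, h; split; [|split]; auto.
  intros x; rewrite <- E; auto.
Qed.

Lemma alpha_mul {S : Type} d al (F G : (nat -> S) -> R) r s :
  alpha_rank_le d al F r -> alpha_rank_le d al G s ->
  alpha_rank_le d al (fun x => F x * G x) (r * s).
Proof.
  intros [gF [hF [dF [eF FF]]]] [gG [hG [dG [eG GG]]]].
  exists (fun j x => gF (j / s)%nat x * gG (j mod s)%nat x),
         (fun j x => hF (j / s)%nat x * hG (j mod s)%nat x).
  split; [|split].
  - intros j x y H. rewrite (dF _ x y H), (dG _ x y H). reflexivity.
  - intros j x y H. rewrite (eF _ x y H), (eG _ x y H). reflexivity.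
  - intros x. rewrite FF, GG, rsum_prod. apply rsum_ext. intros; ring.
Qed.

Lemma alpha_left {S : Type} d al (F : (nat -> S) -> R) :
  depends_only al F -> alpha_rank_le d al F 1.
Proof.
  intros H. exists (fun _ => F), (fun _ _ => 1). split; [|split].
  - intros j; exact H.
  - intros j x y _; reflexivity.
  - intros x; simpl; ring.
Qed.

Lemma alpha_right {S : Type} d al (F : (nat -> S) -> R) :
  depends_only (fun i => (1 <= i <= d)%nat /\ ~ al i) F -> alpha_rank_le d al F 1.
Proof.
  intros H. exists (fun _ _ => 1), (fun _ => F). split; [|split].
  - intros j x y _; reflexivity.
  - intros j; exact H.
  - intros x; simpl; ring.
Qed.

Lemma alpha_mix1 {S : Type} d (al : nat -> Prop) (g : S -> S -> R) r a b :
  al a -> ((1 <= b <= d)%nat /\ ~ al b) -> rank2_le g r ->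
  alpha_rank_le d al (fun x => g (x a) (x b)) r.
Proof.
  intros Ha Hb [u [v E]].
  exists (fun j x => u j (x a)), (fun j x => v j (x b)). split; [|split].
  - intros j x y H; rewrite (H a Ha); reflexivity.
  - intros j x y H; rewrite (H b Hb); reflexivity.
  - intros x; apply E.
Qed.

Lemma alpha_mix2 {S : Type} d (al : nat -> Prop) (g : S -> S -> R) r a b :
  al b -> ((1 <= a <= d)%nat /\ ~ al a) -> rank2_le g r ->
  alpha_rank_le d al (fun x => g (x a) (x b)) r.
Proof.
  intros Hb Ha [u [v E]].
  exists (fun j x => v j (x b)), (fun j x => u j (x a)). split; [|split].
  - intros j x y H; rewrite (H b Hb); reflexivity.
  - intros j x y H; rewrite (H a Ha); reflexivity.
  - intros x; rewrite E; apply rsum_ext; intros; ring.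
Qed.

Lemma nprod_succ_r a n g : nprod a (S n) g = (nprod a n g * g (a + n))%nat.
Proof.
  revert a; induction n; intros a.
  - cbn [nprod]. rewrite Nat.add_0_r. lia.
  - change (nprod a (S (S n)) g) with (g a * nprod (S a) (S n) g)%nat.
    change (nprod a (S n) g) with (g a * nprod (S a) n g)%nat.
    rewrite IHn. replace (S a + n)%nat with (a + S n)%nat by lia.
    rewrite Nat.mul_assoc. reflexivity.
Qed.

Lemma nprod_le a n g M : (forall j, (a <= j < a + n)%nat -> (g j <= M)%nat) ->
  (nprod a n g <= M ^ n)%nat.
Proof.
  revert a; induction n; intros a H; simpl; auto.
  apply Nat.mul_le_mono. apply H; lia. apply IHn; intros; apply H; lia.
Qed.

Lemma nmax_ge a n g j : (a <= j < a + n)%nat -> (g j <= nmax a n g)%nat.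
Proof.
  revert a; induction n; intros a H; simpl. lia.
  destruct (Nat.eq_dec j a). subst; lia.
  specialize (IHn (S a) ltac:(lia)). lia.
Qed.

Lemma odd_pred_neg n : Nat.odd (S n) = negb (Nat.odd n).
Proof. rewrite Nat.odd_succ, <- Nat.negb_odd. reflexivity. Qed.

Lemma main_ind (St : Type) (d k : nat) (f1 : St -> R) (cond : nat -> St -> St -> R)
  (mr : nat -> nat)
  (Hrank : forall i, (2 <= i <= d)%nat -> is_rank2 (cond i) (mr i)) :
  forall n, (1 <= n <= d)%nat ->
  alpha_rank_le d (odd_alpha k) (markov_density f1 cond n)
    (nprod 2 (Nat.min n (2 * k + 2) - 1) mr).
Proof.
  induction n as [|n IH]; intros Hn. lia.
  destruct n as [|n].
  - replace (Nat.min 1 (2 * k + 2) - 1)%nat with 0%nat by lia.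
    apply alpha_left. intros x y H. simpl. rewrite H. reflexivity.
    split; [lia| reflexivity].
  - specialize (IH ltac:(lia)).
    assert (Hr : rank2_le (cond (S (S n))) (mr (S (S n)))) by (apply Hrank; lia).
    apply (alpha_ext _ _ (fun x => cond (S (S n)) (x (S (S n))) (x (S n)) *
                                   markov_density f1 cond (S n) x)).
    { intros x; reflexivity. }
    destruct (le_lt_dec (S (S n)) (2 * k + 2)) as [Hle|Hgt].
    + replace (Nat.min (S (S n)) (2 * k + 2) - 1)%nat with (S n) by lia.
      replace (Nat.min (S n) (2 * k + 2) - 1)%nat with n in IH by lia.
      rewrite nprod_succ_r, Nat.mul_comm. replace (2 + n)%nat with (S (S n)) by lia.
      apply alpha_mul; auto.
      destruct (Nat.odd (S (S n))) eqn:Ho.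
      * apply alpha_mix1; auto.
        -- split; auto. split; try lia.
           destruct (Nat.eq_dec (S (S n)) (2 * k + 2)); auto.
           subst. exfalso. rewrite e in Ho.
           replace (2 * k + 2)%nat with (2 * (k + 1))%nat in Ho by lia.
           rewrite Nat.odd_mul in Ho. simpl in Ho. discriminate.
           lia.
        -- split; [lia|]. intros [_ Ho2]. rewrite odd_pred_neg, Ho2 in Ho. discriminate.
      * apply alpha_mix2; auto.
        -- split; [lia|]. rewrite odd_pred_neg in Ho.
           destruct (Nat.odd (S n)); auto.
        -- split; [lia|]. intros [_ Ho2]. rewrite Ho2 in Ho. discriminate.
    + replace (Nat.min (S (S n)) (2 * k + 2) - 1)%nat with (2 * k + 1)%nat by lia.
      replace (Nat.min (S n) (2 * k + 2) - 1)%nat with (2 * k + 1)%nat in IH by lia.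
      rewrite <- (Nat.mul_1_l (nprod 2 (2 * k + 1) mr)).
      apply alpha_mul; auto.
      apply alpha_right. intros x y H.
      rewrite (H (S (S n))), (H (S n)); auto.
      * split; [lia|]. intros [? _]; lia.
      * split; [lia|]. intros [? _]; lia.
Qed.

Theorem mainTheorem9 (S : Type) (d k : nat) (f1 : S -> R) (cond : nat -> S -> S -> R)
  (mr : nat -> nat)
  (Hf1 : forall s, 0 <= f1 s)
  (Hcond : forall i t s, (2 <= i <= d)%nat -> 0 <= cond i t s)
  (Hrank : forall i, (2 <= i <= d)%nat -> is_rank2 (cond i) (mr i))
  (Hk : (2 * k + 1 <= d)%nat) :
  let m := nmax 2 (d - 1) mr in
  let f := markov_density f1 cond d in
  ((2 * k + 1 < d)%nat ->
     alpha_rank_le d (odd_alpha k) f (nprod 2 (2 * k + 1) mr) /\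
     (nprod 2 (2 * k + 1) mr <= m ^ (2 * k + 1))%nat) /\
  ((2 * k + 1 = d)%nat ->
     alpha_rank_le d (odd_alpha k) f (nprod 2 (2 * k) mr) /\
     (nprod 2 (2 * k) mr <= m ^ (2 * k))%nat).
Proof.
  intros m f. split; intros H; split.
  - replace (2 * k + 1)%nat with (Nat.min d (2 * k + 2) - 1)%nat by lia.
    apply main_ind; auto; lia.
  - apply nprod_le. intros j Hj. apply nmax_ge. lia.
  - replace (2 * k)%nat with (Nat.min d (2 * k + 2) - 1)%nat by lia.
    apply main_ind; auto; lia.
  - apply nprod_le. intros j Hj. apply nmax_ge. lia.
Qed.
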